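(* Let $n\ge1$ and $\boldsymbol x=(x_1,\dots,x_n)\in\mathbb C^n$ with pairwise distinct components. Let $\sigma_{l,d}$ (resp. $\sigma_d$) be the elementary symmetric polynomial of degree $d$ in $x_1,\dots,\widehat{x_l},\dots,x_n$ (resp. in $x_1,\dots,x_n$), with $\sigma_0=1$, and let $\tau_l=\prod_{h\neq l}(x_l-x_h)$. Let $\Sigma=(\sigma_{l,n-j})_{l,j=1}^n$, $X=\mathrm{diag}(x_l)_{l=1}^n$, $T=\mathrm{diag}(\tau_l^{-1})_{l=1}^n$. Then for every $r\in\{0,1,\dots,n\}$, $${}^t\Sigma\,X^rT\,\Sigma=\begin{pmatrix}(-1)^{n-r}A&0\\0&(-1)^{n-r+1}B\end{pmatrix},$$ where $A$ is the $r\times r$ matrix with $(k,j)$-entry $a_{k,j}=\sigma_{n+r-k-j+1}$ if $k+j\ge r+1$ and $0$ otherwise, and $B$ is the $(n-r)\times(n-r)$ matrix with $(k,j)$-entry $b_{k,j}=\sigma_{n-r-k-j+1}$ if $k+j\le n-r+1$ and $0$ otherwise.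
   Context: ${}^t\Sigma$ denotes the transpose of $\Sigma$. *)

(* Defs.v *)
From mathcomp Require Import all_boot all_algebra.
From mathcomp Require Import complex.
From mathcomp Require Import reals Rstruct.
Set Implicit Arguments. Unset Strict Implicit. Unset Printing Implicit Defensive.
Import GRing.Theory Num.Theory.
Local Open Scope ring_scope.

Definition C : numClosedFieldType := (Rdefinitions.R)[i].

Definition esymx n (x : 'I_n -> C) (d : nat) : C :=
  \sum_(I : {set 'I_n} | #|I| == d) \prod_(i in I) x i.

Definition esymx_omit n (x : 'I_n -> C) (l : 'I_n) (d : nat) : C :=
  \sum_(I : {set 'I_n} | (#|I| == d) && (l \notin I)) \prod_(i in I) x i.

Definition tau n (x : 'I_n -> C) (l : 'I_n) : C :=
  \prod_(h < n | h != l) (x l - x h).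

(* Sigma = (sigma_{l, n-j})_{l,j=1..n}; with 0-based l', j' : sigma_{l', n-1-j'} *)
Definition SigmaM n (x : 'I_n -> C) : 'M[C]_n :=
  \matrix_(l < n, j < n) esymx_omit x l (n - j.+1).

Definition XM n (x : 'I_n -> C) : 'M[C]_n := diag_mx (\row_l x l).

Definition TM n (x : 'I_n -> C) : 'M[C]_n := diag_mx (\row_l (tau x l)^-1).

Definition AM n (x : 'I_n -> C) (r : nat) : 'M[C]_r :=
  \matrix_(k < r, j < r)
    if (r.+1 <= k.+1 + j.+1)%N then esymx x (n + r + 1 - (k.+1 + j.+1))%N else 0.

Definition BM n (x : 'I_n -> C) (r : nat) : 'M[C]_(n - r) :=
  \matrix_(k < n - r, j < n - r)
    if (k.+1 + j.+1 <= (n - r).+1)%N then esymx x ((n - r).+1 - (k.+1 + j.+1))%N else 0.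

Definition blockdiag n r (hr : (r <= n)%N) (P : 'M[C]_r) (Q : 'M[C]_(n - r)) : 'M[C]_n :=
  castmx (subnKC hr, subnKC hr) (block_mx P 0 0 Q).

(* Main.v *)
Require Import Defs.
From mathcomp Require Import all_boot all_algebra.
From mathcomp Require Import complex.
From mathcomp Require Import reals Rstruct.
From mathcomp Require Import zify.
Set Implicit Arguments. Unset Strict Implicit. Unset Printing Implicit Defensive.
Import GRing.Theory Num.Theory.
Local Open Scope ring_scope.

Lemma coefP n (x : 'I_n -> C) (S : {set 'I_n}) k :
  (\prod_(h in S) ('X - (x h)%:P))`_k =
  \sum_(J : {set 'I_n} | (J \subset S) && (#|S| - #|J| == k)%N)
     (-1) ^+ #|J| * \prod_(i in J) x i.
Proof.
have E : \prod_(h in S) ('X - (x h)%:P) =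
  \prod_h ((if h \in S then - (x h)%:P else 0) + (if h \in S then 'X else 1)).
  rewrite big_mkcond; apply: eq_bigr => h _; case: (h \in S) => /=.
    by rewrite addrC.
  by rewrite add0r.
have E2 : \prod_h ((if h \in S then - (x h)%:P else 0) + (if h \in S then 'X else 1))
  = \sum_(J : {set 'I_n}) \prod_i (if i \in J then if i \in S then - (x i)%:P else 0
                  else if i \in S then 'X else 1) by exact: bigA_distr.
rewrite E E2.
rewrite (bigID (fun J : {set 'I_n} => J \subset S)) /=.
rewrite [X in _ + X]big1 ?addr0; last first.
  move=> J /subsetPn [i iJ iS].
  by rewrite (bigD1 i) //= iJ (negbTE iS) mul0r.
rewrite coef_sum big_mkcondr /=.
apply: eq_bigr => J JS.
have -> : \prod_i (if i \in J then if i \in S then - (x i)%:P else 0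
                  else if i \in S then 'X else 1)
   = ((-1) ^+ #|J| * \prod_(i in J) x i)%:P * 'X^(#|S| - #|J|).
  rewrite (bigID (fun i => i \in J)) /=.
  congr (_ * _).
    rewrite (eq_bigr (fun i => (- x i)%:P)); last first.
      by move=> i iJ; rewrite iJ (subsetP JS i iJ) polyCN.
    by rewrite -rmorph_prod prodrN.
  rewrite (eq_bigr (fun i => if i \in S then 'X else 1)); last first.
    by move=> i /negbTE ->.
  rewrite -big_mkcondr /=.
  rewrite (eq_bigl (fun i => i \in S :\: J)); last first.
    by move=> i; rewrite !inE andbC.
  by rewrite prodr_const cardsD (setIidPr JS).
rewrite coefCM coefXn eq_sym.
by case: (_ == _); rewrite ?mulr1 ?mulr0.
Qed.

Definition gp n (x : 'I_n -> C) (S : {set 'I_n}) : {poly C} :=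
  \prod_(h in S) ('X - (x h)%:P).

Lemma size_gp n (x : 'I_n -> C) (S : {set 'I_n}) : (size (gp x S) <= #|S|.+1)%N.
Proof.
apply/leq_sizeP => j hj; rewrite /gp coefP big1 // => J /andP [_ /eqP E].
have : (#|S| - #|J| <= #|S|)%N by apply: leq_subr.
lia.
Qed.

Lemma coef_full n (x : 'I_n -> C) k :
  (gp x setT)`_k = if (k <= n)%N then (-1) ^+ (n - k) * esymx x (n - k) else 0.
Proof.
rewrite /gp coefP cardsT card_ord; case: leqP => hk.
  rewrite /esymx mulr_sumr; apply: eq_big => J.
    have hJ : (#|J| <= n)%N by rewrite -[n in (_ <= n)%N]card_ord max_card.
    rewrite subsetT /=; apply/idP/idP => /eqP H; apply/eqP.
      by rewrite -H subKn.
    by rewrite H subKn.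
  rewrite subsetT /= => /eqP H.
  have hJ : (#|J| <= n)%N by rewrite -[n in (_ <= n)%N]card_ord max_card.
  by rewrite -H subKn.
rewrite big1 // => J /andP [_ /eqP E].
have : (n - #|J| <= n)%N by apply: leq_subr.
lia.
Qed.

Lemma coef_omit n (x : 'I_n -> C) l j : (j < n)%N ->
  (gp x [set~ l])`_j = (-1) ^+ (n - j.+1) * esymx_omit x l (n - j.+1).
Proof.
move=> hj.
rewrite /gp coefP cardsC1 card_ord /esymx_omit mulr_sumr; apply: eq_big => J.
  have hJ : (#|J| <= n)%N by rewrite -[n in (_ <= n)%N]card_ord max_card.
  have -> : (J \subset [set~ l]) = (l \notin J).
    apply/subsetP/idP.
      by move=> H; apply/negP => /H; rewrite !inE eqxx.
    by move=> H i iJ; rewrite !inE; apply: contraNneq H => <-.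
  case lJ: (l \in J); first by rewrite /= andbF.
  rewrite /= andbT.
  have hJ' : (#|J| <= n.-1)%N.
    rewrite -[in X in (_ <= X)%N](card_ord n) -(cardsC1 l); apply: subset_leq_card; apply/subsetP => i iJ.
    by rewrite !inE; apply/eqP => E; move: iJ; rewrite E lJ.
  apply/idP/idP => /eqP H; apply/eqP; move: H hJ'; set m := #|J|; lia.
move=> /andP [JS /eqP H].
have hJ' : (#|J| <= n.-1)%N.
  by rewrite -[in X in (_ <= X)%N](card_ord n) -(cardsC1 l); apply: subset_leq_card.
have -> : #|J| = (n - j.+1)%N by move: H hJ'; set m := #|J|; lia.
by [].
Qed.

Lemma f_factor n (x : 'I_n -> C) l :
  gp x setT = ('X - (x l)%:P) * gp x [set~ l].
Proof.
rewrite /gp (bigD1 l) ?inE //=; congr (_ * _); apply: eq_bigl => h; rewrite !inE.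
by [].
Qed.

Lemma size_omit n (x : 'I_n -> C) l : (size (gp x [set~ l]) <= n)%N.
Proof.
apply: leq_trans (size_gp _ _) _; rewrite cardsC1 card_ord.
by case: n x l => [|n] x [].
Qed.

Definition Npf (r : nat) (c : {poly C}) (i j : nat) : C :=
  if (r <= i + j + 1)%N then c`_(i + j + 1 - r) else 0.
Definition Nf (r : nat) (c : {poly C}) (i j : nat) : C :=
  if ((i < r) && (j < r))%N then - Npf r c i j
  else if ((r <= i) && (r <= j))%N then Npf r c i j else 0.

Lemma core n (x : 'I_n -> C) r (hr : (r <= n)%N) m (j : nat) : (j < n)%N ->
  \sum_(i < n) x m ^+ i * Nf r (gp x setT) i j = x m ^+ r * (gp x [set~ m])`_j.
Proof.
move=> hj.
set y := x m; set g := gp x [set~ m]; set f := gp x setT.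
have fE : f = 'X * g - y%:P * g by rewrite /f (f_factor x m) mulrBl.
have rec0 : f`_0 = - y * g`_0 by rewrite fE coefB coefXM coefCM sub0r mulNr.
have recS k : f`_k.+1 = g`_k - y * g`_k.+1 by rewrite fE coefB coefXM coefCM.
pose F i := y ^+ i * (if (r <= i + j)%N then g`_(i + j - r) else 0).
have step i : y ^+ i * Npf r f i j = F i - F i.+1.
  rewrite /Npf /F.
  case: (ltngtP (i + j + 1) r) => h.
  - have c1 : (r <= i + j + 1)%N = false by apply/negbTE; rewrite -ltnNge.
    have c2 : (r <= i + j)%N = false by apply/negbTE; rewrite -ltnNge; lia.
    have c3 : (r <= i.+1 + j)%N = false by apply/negbTE; rewrite -ltnNge; lia.
    by rewrite ?c1 c2 c3 !mulr0 subr0.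
  - have c1 : (r <= i + j + 1)%N by lia.
    have c2 : (r <= i + j)%N by lia.
    have c3 : (r <= i.+1 + j)%N by lia.
    rewrite ?c1 c2 c3.
    have -> : (i + j + 1 - r = (i + j - r).+1)%N by lia.
    have -> : (i.+1 + j - r = (i + j - r).+1)%N by lia.
    by rewrite recS mulrBr exprSr mulrA.
  - have c2 : (r <= i + j)%N = false by apply/negbTE; rewrite -ltnNge; lia.
    have c3 : (r <= i.+1 + j)%N by lia.
    rewrite ?h ?leqnn c2 c3 ?subnn.
    have -> : (i.+1 + j - r = 0)%N by lia.
    by rewrite rec0 mulr0 sub0r exprSr mulNr mulrN mulrA.
have tel a b : (a <= b)%N -> \sum_(a <= i < b) (F i - F i.+1) = F a - F b.
  move=> hab; rewrite -[LHS]opprK -sumrN.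
  rewrite (eq_bigr (fun i => F i.+1 - F i)); last by move=> i _; rewrite opprB.
  by rewrite telescope_sumr // opprB.
rewrite -(big_mkord xpredT (fun i => y ^+ i * Nf r f i j)).
rewrite (big_cat_nat (leq0n r) hr) /=.
case: (ltnP j r) => hjr.
  rewrite [X in _ + X]big_nat_cond [X in _ + X]big1 ?addr0; last first.
    move=> i /andP [/andP [hi _] _]; rewrite /Nf.
    by rewrite ltnNge hi /= (leqNgt r j) hjr /= mulr0.
  rewrite big_nat_cond (eq_bigr (fun i => - (F i - F i.+1))); last first.
    by move=> i /andP [/andP [_ hi] _]; rewrite /Nf hi hjr /= mulrN step.
  rewrite sumrN -big_nat_cond tel // /F add0n.
  have -> : (r <= j)%N = false by apply/negbTE; rewrite -ltnNge.
  have -> : (r <= r + j)%N by lia.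
  by rewrite addKn mulr0 sub0r opprK.
rewrite [X in X + _]big_nat_cond [X in X + _]big1 ?add0r; last first.
  move=> i /andP [/andP [_ hi] _]; rewrite /Nf.
  by rewrite hi (ltnNge j r) hjr /= (leqNgt r i) hi /= mulr0.
rewrite big_nat_cond (eq_bigr (fun i => F i - F i.+1)); last first.
  by move=> i /andP [/andP [hi _] _]; rewrite /Nf (ltnNge i r) hi /= hjr step.
rewrite -big_nat_cond tel // /F.
have -> : (r <= n + j)%N by lia.
have -> : (r <= r + j)%N by lia.
rewrite addKn.
have -> : g`_(n + j - r) = 0.
  apply/(leq_sizeP _ n) => //; [exact: size_omit | lia].
by rewrite mulr0 subr0.
Qed.

Lemma F1 n (x : 'I_n -> C) l m :
  \sum_(j < n) (gp x [set~ l])`_j * x m ^+ j = if l == m then tau x l else 0.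
Proof.
rewrite -horner_coef_wide ?size_omit // /gp horner_prod.
under eq_bigr do rewrite hornerXsubC.
case: eqP => [<-|/eqP lm].
  by rewrite /tau; apply: eq_bigl => h; rewrite !inE.
by rewrite (bigD1 m) ?inE 1?eq_sym //= subrr mul0r.
Qed.

Lemma sgnP a b : ((a + b) %% 2 = 0)%N -> (-1) ^+ a = (-1) ^+ b :> C.
Proof.
move=> H; rewrite -signr_odd -(signr_odd _ b).
have : odd (a + b) = false by move: (modn2 (a + b)); rewrite H; case: (odd _).
by rewrite oddD; case: (odd a); case: (odd b).
Qed.

Lemma signE3 a b c d (e : C) : ((a + b + c + d) %% 2 = 0)%N ->
  (-1) ^+ a * ((-1) ^+ b * e) * (-1) ^+ c = (-1) ^+ d * e.
Proof.
move=> H; rewrite [X in X = _]mulrC !mulrA -!exprD; congr (_ * _).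
apply: sgnP; lia.
Qed.

Theorem lemma7p3 (n : nat) (hn : (1 <= n)%N) (x : 'I_n -> C) (hx : injective x)
  (r : nat) (hr : (r <= n)%N) :
  (SigmaM x)^T *m (XM x ^+ r *m TM x) *m SigmaM x =
  blockdiag hr ((-1) ^+ (n - r) *: AM x r) ((-1) ^+ (n - r + 1) *: BM x r).
Proof.
set f := gp x setT.
pose G : 'M[C]_n := \matrix_(l, j) (gp x [set~ l])`_j.
pose D : 'M[C]_n := diag_mx (\row_(j < n) (-1) ^+ (n - j.+1)).
pose W : 'M[C]_n := \matrix_(l, i) x l ^+ i.
pose Xr : 'M[C]_n := diag_mx (\row_l x l ^+ r).
pose Tp : 'M[C]_n := diag_mx (\row_l tau x l).
pose N : 'M[C]_n := \matrix_(i, j) Nf r f i j.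
have S1 : SigmaM x = G *m D.
  apply/matrixP => l j; rewrite mul_mx_diag !mxE coef_omit //.
  rewrite mulrC mulrA -exprD (@sgnP (n - j.+1 + (n - j.+1)) 0) ?mul1r //; lia.
have S2 : XM x ^+ r = Xr.
  rewrite /Xr; elim: (r) => [|k IH].
    by apply/matrixP => i j; rewrite !mxE.
  rewrite exprS IH -mulmxE /XM mul_diag_mx; apply/matrixP => i j; rewrite !mxE.
  by rewrite mulrnAr exprS.
have S3 : G *m W^T = Tp.
  apply/matrixP => l m; rewrite !mxE.
  under eq_bigr do rewrite !mxE.
  rewrite F1; case: eqP => [->|_]; by rewrite ?mulr1n ?mulr0n.
have S4 : W *m N = Xr *m G.
  apply/matrixP => m j; rewrite mul_diag_mx !mxE.
  under eq_bigr do rewrite !mxE.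
  by apply: core.
have S5 : N^T = N.
  apply/matrixP => i j; rewrite !mxE /Nf /Npf (addnC j i) (andbC (j < r)%N) (andbC (r <= j)%N).
  by [].
have tau0 l : tau x l != 0.
  apply/prodf_neq0 => h hl; rewrite subr_eq0; apply/eqP => E.
  by move: hl; rewrite (hx _ _ E) eqxx.
have S6 : Tp *m TM x = 1%:M.
  apply/matrixP => i j; rewrite mul_diag_mx !mxE.
  case: eqP => [->|_]; last by rewrite !mulr0n mulr0.
  by rewrite !mulr1n divff.
have S7 : D *m D = 1%:M.
  apply/matrixP => i j; rewrite mul_diag_mx !mxE.
  case: eqP => [->|_]; last by rewrite !mulr0n mulr0.
  rewrite !mulr1n -exprD (@sgnP (n - j.+1 + (n - j.+1)) 0) //; lia.
have DT : D^T = D by rewrite /D tr_diag_mx.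
have K : (W^T *m TM x) *m G = 1%:M.
  by apply: mulmx1C; rewrite mulmxA S3 S6.
have H : G^T *m Xr *m TM x *m G = N.
  have -> : G^T *m Xr = (Xr *m G)^T by rewrite trmx_mul tr_diag_mx.
  rewrite -S4 trmx_mul S5 -!mulmxA [W^T *m _]mulmxA K mulmx1.
  by [].
have S8 : blockdiag hr ((-1) ^+ (n - r) *: AM x r) ((-1) ^+ (n - r + 1) *: BM x r)
   = D *m N *m D.
  apply/matrixP => i j; rewrite mul_mx_diag mul_diag_mx /blockdiag castmxE.
  set i0 := cast_ord _ i; set j0 := cast_ord _ j.
  case: (splitP i0) => [i' Hi | i' Hi]; case: (splitP j0) => [j' Hj | j' Hj].
  - have -> : i0 = lshift _ i' by apply: val_inj.
    have -> : j0 = lshift _ j' by apply: val_inj.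
    rewrite block_mxEul !mxE.
    have Ei : (i : nat) = i' by rewrite -Hi.
    have Ej : (j : nat) = j' by rewrite -Hj.
    have hi := ltn_ord i'; have hj := ltn_ord j'.
    rewrite /Nf Ei Ej hi hj /= /Npf.
    case: (boolP (r <= i' + j' + 1)%N) => h.
      have -> : (r < i'.+1 + j'.+1)%N by lia.
      rewrite /f coef_full.
      have -> : (i' + j' + 1 - r <= n)%N by lia.
      have -> : (n - (i' + j' + 1 - r) = n + r + 1 - (i'.+1 + j'.+1))%N by lia.
      rewrite -mulNr -(mulN1r ((-1) ^+ _)) -exprS.
      symmetry; apply: signE3; lia.
    have -> : (r < i'.+1 + j'.+1)%N = false by apply/negbTE; rewrite -leqNgt; lia.
    by rewrite oppr0 !mulr0 mul0r.
  - have -> : i0 = lshift _ i' by apply: val_inj.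
    have -> : j0 = rshift _ j' by apply: val_inj.
    rewrite block_mxEur !mxE.
    have Ei : (i : nat) = i' by rewrite -Hi.
    have Ej : (j : nat) = (r + j')%N by rewrite -Hj.
    have hi := ltn_ord i'.
    rewrite /Nf Ei Ej.
    have -> : ((i' < r) && (r + j' < r))%N = false by rewrite (ltnNge (r + j') r) leq_addr andbF.
    have -> : ((r <= i') && (r <= r + j'))%N = false by rewrite leqNgt hi.
    by rewrite mulr0 mul0r.
  - have -> : i0 = rshift _ i' by apply: val_inj.
    have -> : j0 = lshift _ j' by apply: val_inj.
    rewrite block_mxEdl !mxE.
    have Ei : (i : nat) = (r + i')%N by rewrite -Hi.
    have Ej : (j : nat) = j' by rewrite -Hj.
    have hj := ltn_ord j'.
    rewrite /Nf Ei Ej.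
    have -> : ((r + i' < r) && (j' < r))%N = false by rewrite (ltnNge (r + i') r) leq_addr.
    have -> : ((r <= r + i') && (r <= j'))%N = false by rewrite (leqNgt r j') hj andbF.
    by rewrite mulr0 mul0r.
  - have -> : i0 = rshift _ i' by apply: val_inj.
    have -> : j0 = rshift _ j' by apply: val_inj.
    rewrite block_mxEdr !mxE.
    have Ei : (i : nat) = (r + i')%N by rewrite -Hi.
    have Ej : (j : nat) = (r + j')%N by rewrite -Hj.
    have hi := ltn_ord i'; have hj := ltn_ord j'.
    rewrite /Nf Ei Ej.
    have -> : ((r + i' < r) && (r + j' < r))%N = false by rewrite (ltnNge (r + i') r) leq_addr.
    have -> : ((r <= r + i') && (r <= r + j'))%N by rewrite !leq_addr.
    rewrite /Npf.
    have -> : (r <= r + i' + (r + j') + 1)%N by lia.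
    rewrite /f coef_full.
    case: (boolP (i'.+1 + j'.+1 <= (n - r).+1)%N) => h.
      have -> : (r + i' + (r + j') + 1 - r <= n)%N by lia.
      have -> : (n - (r + i' + (r + j') + 1 - r) = (n - r).+1 - (i'.+1 + j'.+1))%N by lia.
      symmetry; apply: signE3; lia.
    have -> : (r + i' + (r + j') + 1 - r <= n)%N = false by apply/negbTE; rewrite -ltnNge; lia.
    by rewrite !mulr0 mul0r.
rewrite S1 S2 S8 trmx_mul DT !mulmxA; congr (_ *m _).
by rewrite -H !mulmxA.
Qed.
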